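(* Let $m,k$ be integers with $1\le k\le m$. Let $p$ be a real polynomial of degree at most $2m-k-1$ and $q$ a real polynomial of degree at most $k-1$. Let $t_1,\dots,t_m$ be distinct numbers in $(0,1)$ such that for all $i=1,\dots,m$, $$p^{\mathrm{even}}(t_i)+q^{\mathrm{odd}}(t_i)(1-t_i^2)^{m-k}=0\quad\text{and}\quad p^{\mathrm{odd}}(t_i)+q^{\mathrm{even}}(t_i)(1-t_i^2)^{m-k}=0.$$ Then $p\equiv0$ and $q\equiv0$.
   Context: For a polynomial $p(t)=\sum_{j=0}^N c_jt^j$, $p^{\mathrm{even}}(t)=\sum_{2j\le N}c_{2j}t^{2j}$ and $p^{\mathrm{odd}}(t)=\sum_{1\le 2j-1\le N}c_{2j-1}t^{2j-1}$. *)

(* Defs.v *)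
From HB Require Import structures.
From mathcomp Require Import all_boot all_order all_algebra.
From mathcomp Require Import reals.
Set Implicit Arguments. Unset Strict Implicit. Unset Printing Implicit Defensive.
Import Order.TTheory GRing.Theory Num.Theory.
Local Open Scope ring_scope.

(* Even / odd parts of a polynomial, as in the paper:
   p^even(t) = sum_{2j <= N} c_{2j} t^{2j},  p^odd(t) = sum c_{2j-1} t^{2j-1}.
   (Not MathComp's even_poly/odd_poly, which are compressed in degree.) *)
Definition peven (R : nzRingType) (p : {poly R}) : {poly R} :=
  \poly_(i < size p) (if ~~ odd i then p`_i else 0).
Definition podd (R : nzRingType) (p : {poly R}) : {poly R} :=
  \poly_(i < size p) (if odd i then p`_i else 0).

(* Main.v *)
From HB Require Import structures.
From mathcomp Require Import all_boot all_order all_algebra.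
Require Import Defs.
From mathcomp Require Import reals.
From mathcomp Require Import ring zify.
From mathcomp Require Import classical_sets boolp functions topology normedtype derive realfun.
Import Order.TTheory GRing.Theory Num.Theory.
Import numFieldNormedType.Exports.
Local Open Scope ring_scope.

Definition Eop {R : realType} (j : nat) (f : {poly R}) : {poly R} :=
  'X * f^`() - j%:R *: f.

Lemma WR (R : realType) (j : nat) (f : {poly R}) (a b : R) :
  0 < a -> a < b -> f.[a] = 0 -> f.[b] = 0 ->
  exists2 c, a < c < b & (Eop j f).[c] = 0.
Proof.
move=> a0 ab fa fb.
pose g : {poly R} := 'X^j.
pose phi := (horner f \* (fun x : R => (g.[x])^-1)).
have gpos (x : R) : 0 < x -> g.[x] != 0 by move=> x0; rewrite /g hornerXn expf_neq0 // gt_eqF.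
have der (x : R) : 0 < x -> is_derive x 1 phi (f.[x] *: (- (g.[x]) ^- 2 *: g^`().[x]) + (g.[x])^-1 *: f^`().[x]).
  move=> x0; rewrite /phi.
  apply: is_deriveM.
  exact: (@is_deriveV R (horner g) x _ 1 (gpos x x0) (is_derive_poly g x)).
have := @Rolle R phi a b ab.
case.
- move=> x; rewrite in_itv /= => /andP[ax _].
  by case: (der x (lt_trans a0 ax)).
- apply: derivable_within_continuous => x; rewrite in_itv /= => /andP[ax _].
  by case: (der x (lt_le_trans a0 ax)).
- by rewrite /phi /= fa fb !mul0r.
move=> c; rewrite in_itv /= => /andP[ac cb] dc.
exists c; first by rewrite ac cb.
have c0 : 0 < c by apply: lt_trans ac.
have d1 := der c c0.
have e : (f.[c] *: (- (g.[c]) ^- 2 *: g^`().[c]) + (g.[c])^-1 *: f^`().[c]) = 0.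
  by rewrite -(@derive_val _ _ _ _ _ _ _ d1) (@derive_val _ _ _ _ _ _ _ dc).
move: e; rewrite /Eop /g derivXn !hornerE.
rewrite hornerMn hornerXn => e.
have cn : c != 0 by rewrite gt_eqF.
clear dc d1 der gpos phi g.
case: j e => [|j] e.
  move: e; rewrite /GRing.scale /= !mulr0n !mulr0 add0r expr0 invr1 mul1r => ->.
  by rewrite mulr0 mul0r subr0.
have := congr1 (fun z => z * c ^+ j.+2) e; rewrite mul0r => {}e.
rewrite -[RHS](_ : 0 * (c ^+ j.+1)^-1 = 0) ?mul0r // -e /=.
rewrite /GRing.scale /=.
rewrite -[c ^+ j *+ _]mulr_natr !exprS.
have zn : c ^+ j != 0 by rewrite expf_neq0.
move: (f^`().[c]) (f.[c]) (c ^+ j) zn => F1 F0 z zn.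
field.
by rewrite zn cn.
Qed.

Lemma coefE {R : realType} (j : nat) (f : {poly R}) i :
  (Eop j f)`_i = (i%:R - j%:R) * f`_i.
Proof.
rewrite /Eop coefB coefXM coefZ coef_deriv.
case: i => [|i] /=; first by rewrite !sub0r mulNr.
by rewrite mulrBl !mulr_natl.
Qed.

Definition Lop {R : realType} (js : seq nat) (f : {poly R}) : {poly R} :=
  foldr (@Eop R) f js.

Lemma coefL {R : realType} js (f : {poly R}) i :
  (Lop js f)`_i = (\prod_(j <- js) (i%:R - j%:R)) * f`_i.
Proof.
elim: js => [|j js IH] /=; first by rewrite big_nil mul1r.
by rewrite coefE IH big_cons mulrA.
Qed.

Definition nroots {R : realType} (g : {poly R}) (lo hi : R) (n : nat) :=
  exists s : seq R, [/\ size s = n, uniq s,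
    all (fun x => lo < x < hi) s & all (root g) s].

Lemma step_aux {R : realType} j (g : {poly R}) hi (s : seq R) : forall a,
  0 < a -> root g a -> path <%R a s -> all (root g) s -> all (fun x => x < hi) s ->
  exists s', [/\ size s' = size s, path <%R a s', all (root (Eop j g)) s'
    & all (fun x => x < hi) s'].
Proof.
elim: s => [|b t IH] a a0 ra.
  by move=> _ _ _; exists [::].
rewrite /= => /andP[ab pt] /andP[rb rt] /andP[bh th].
have [c /andP[ac cb] rc] := @WR R j g a b a0 ab (eqP ra) (eqP rb).
have [s1 [s1s ps1 rs1 hs1]] := IH b (lt_trans a0 ab) rb pt rt th.
exists (c :: s1); split => /=.
- by rewrite s1s.
- rewrite ac /=; case: s1 ps1 {s1s rs1 hs1} => //= x t' /andP[bx ->].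
  by rewrite (lt_trans cb bx).
- by rewrite rs1 andbT; apply/eqP.
- by rewrite hs1 (lt_trans cb bh).
Qed.

Lemma step {R : realType} j (g : {poly R}) lo hi n :
  0 <= lo -> nroots g lo hi n.+1 -> nroots (Eop j g) lo hi n.
Proof.
move=> lo0 [s [ss us ins rs]].
have ps : perm_eq (sort <=%R s) s by rewrite perm_sort.
have srt : sorted <%R (sort <=%R s) by rewrite sort_lt_sorted.
move: (perm_size ps) (perm_all (fun x => lo < x < hi) ps) (perm_all (root g) ps) srt.
case: (sort _ _) => [|a s0]; first by rewrite ss.
rewrite ss ins rs /= => -[sz] /andP[/andP[la ah] ins0] /andP[ra rs0] ps0.
have a0 : 0 < a by apply: le_lt_trans la.
have hs0 : all (fun x => x < hi) s0.
  by apply/allP => x /(allP ins0) /andP[].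
have [s' [s's ps' rs' hs']] := @step_aux R j g hi s0 a a0 ra ps0 rs0 hs0.
exists s'; split.
- by rewrite s's.
- exact: (lt_sorted_uniq (path_sorted ps')).
- apply/allP => x xs'.
  have := allP (order_path_min (@lt_trans _ _) ps') x xs'.
  by move=> ax; rewrite (lt_trans la ax) /= (allP hs').
- exact: rs'.
Qed.

Lemma stepL {R : realType} js (g : {poly R}) lo hi n :
  0 <= lo -> nroots g lo hi (size js + n) -> nroots (Lop js g) lo hi n.
Proof.
move=> lo0; elim: js n => [|j js IH] n //= h.
apply: step => //; apply: IH.
by rewrite addnS.
Qed.

Lemma nroots_le {R : realType} (g : {poly R}) lo hi n n' :
  (n' <= n)%N -> nroots g lo hi n -> nroots g lo hi n'.
Proof.
move=> le [s [ss us ins rs]]; exists (take n' s); split.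
- by rewrite size_takel // ss.
- exact: take_uniq.
- by apply/allP => x /mem_take /(allP ins).
- by apply/allP => x /mem_take /(allP rs).
Qed.

Lemma GP {R : realType} (S : seq nat) : forall (g : {poly R}) lo hi n,
  (forall i, i \notin S -> g`_i = 0) -> 0 <= lo -> (size S <= n)%N ->
  nroots g lo hi n -> g = 0.
Proof.
elim: S => [|j S IH] g lo hi n hS lo0 sz nr.
  by apply/polyP => i; rewrite coef0 hS.
have nr1 : nroots g lo hi (size S).+1 by apply: nroots_le nr.
have h0 : Eop j g = 0.
  apply: (IH _ lo hi (size S)) => //; last exact: step.
  move=> i iS; rewrite coefE.
  have [->|ij] := eqVneq i j; first by rewrite subrr mul0r.
  by rewrite hS ?mulr0 // in_cons negb_or ij.
have gi i : i != j -> g`_i = 0.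
  move=> ij; have := congr1 (fun p : {poly R} => p`_i) h0; rewrite /= coefE coef0.
  move/eqP; rewrite mulf_eq0 subr_eq0 eqr_nat (negbTE ij) /=.
  by move/eqP.
have ge : g = g`_j *: 'X^j.
  apply/polyP => i; rewrite coefZ coefXn.
  by have [->|ij] := eqVneq i j; [rewrite mulr1|rewrite mulr0 gi].
case: nr1 => -[|c s] [//= _ _ /andP[/andP[lc _] _] /andP[rc _]].
move: rc; rewrite ge /root hornerZ hornerXn mulf_eq0 expf_eq0 (gt_eqF (le_lt_trans lo0 lc)) andbF orbF.
by move/eqP => ->; rewrite scale0r.
Qed.

Lemma core {R : realType} (m r : nat) (P Q : {poly R}) (hiA : R) :
  (r < m)%N -> 1 < hiA -> (size P <= m + r)%N -> (size Q <= m - r)%N ->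
  nroots (P + 'X^r * Q) 1 hiA m -> nroots (P - 'X^r * Q) 0 1 m -> P = 0 /\ Q = 0.
Proof.
move=> rm h1 sP sQ nA nB.
set js := iota r (m - r).
have injs i : (i \in js) = (r <= i < m)%N by rewrite mem_iota subnKC // ltnW.
have cz i : (r <= i < m)%N -> \prod_(j <- js) (i%:R - j%:R : R) = 0.
  move=> hi; apply/eqP; rewrite prodf_seq_eq0; apply/hasP; exists i.
    by rewrite injs.
  by rewrite subrr eqxx.
have cnz i : ~~ (r <= i < m)%N -> \prod_(j <- js) (i%:R - j%:R : R) != 0.
  move=> hi; rewrite prodf_seq_neq0; apply/allP => j; rewrite injs => jr /=.
  by rewrite subr_eq0 eqr_nat; apply: contra hi => /eqP ->.
have Qz i : (m <= i)%N -> ('X^r * Q)`_i = 0.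
  move=> im; rewrite coefXnM; case: ltnP => // ir.
  by rewrite nth_default // (leq_trans sQ) // leq_sub2r.
have LA : Lop js (P + 'X^r * Q) = Lop js P.
  apply/polyP => i; rewrite !coefL coefD.
  have [im|im] := ltnP i m; last by rewrite Qz // addr0.
  case: (ltnP i r) => ir; first by rewrite coefXnM ir addr0.
  by rewrite cz ?ir ?im // !mul0r.
have LB : Lop js (P - 'X^r * Q) = Lop js P.
  apply/polyP => i; rewrite !coefL coefB.
  have [im|im] := ltnP i m; last by rewrite Qz // subr0.
  case: (ltnP i r) => ir; first by rewrite coefXnM ir subr0.
  by rewrite cz ?ir ?im // !mul0r.
have szjs : (size js + r = m)%N by rewrite size_iota subnK // ltnW.
have [sA [sAs uA inA rA]] : nroots (Lop js P) 1 hiA r.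
  rewrite -LA; apply: stepL.
  - first [ exact: (ltW ltr01) | exact: ler01 | done | (rewrite lexx) ].
  -
  by rewrite szjs.
have [sB [sBs uB inB rB]] : nroots (Lop js P) 0 1 r.
  rewrite -LB; apply: stepL; first exact: lexx.
  by rewrite szjs.
have L0 : Lop js P = 0.
  apply: (@GP R (iota 0 r ++ iota m r) _ 0 hiA (r + r)) => //.
  - move=> i; rewrite mem_cat !mem_iota /= negb_or => /andP[i1 i2].
    rewrite coefL; have [im|im] := ltnP i m.
      by rewrite cz ?mul0r // im andbT leqNgt.
    rewrite nth_default ?mulr0 // (leq_trans sP) //.
    by move: i2; rewrite im /= -leqNgt.
  - by rewrite size_cat !size_iota.
  exists (sB ++ sA); split.
  - by rewrite size_cat sAs sBs.
  - rewrite cat_uniq uB uA andbT /=; apply/hasPn => x xA; apply/negP => xB.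
    have /andP[_ x1] := allP inB x xB; have /andP[x1' _] := allP inA x xA.
    by move: (lt_trans x1 x1'); rewrite ltxx.
  - rewrite all_cat; apply/andP; split; apply/allP => x.
      by move=> /(allP inB) /andP[-> x1]; rewrite (lt_trans x1 h1).
    by move=> /(allP inA) /andP[x1 ->]; rewrite (lt_trans ltr01 x1).
  - by rewrite all_cat rA rB.
have Pz i : ~~ (r <= i < m)%N -> P`_i = 0.
  move=> hi; have := congr1 (fun p : {poly R} => p`_i) L0; rewrite /= coefL coef0.
  by move/eqP; rewrite mulf_eq0 (negbTE (cnz i hi)) /= => /eqP.
have supp (s : R) i : i \notin js -> (P + s *: ('X^r * Q))`_i = 0.
  rewrite injs => hi; rewrite coefD coefZ Pz // add0r.
  move: hi; rewrite negb_and -!ltnNge => /orP[ir|im].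
    by rewrite coefXnM ir mulr0.
  by rewrite Qz ?mulr0.
have A0 : P + 'X^r * Q = 0.
  rewrite -[_ * Q]scale1r; apply: (@GP R js _ 1 hiA m (supp 1)).
  - exact: ler01.
  - by rewrite -szjs leq_addr.
  - by rewrite scale1r.
have B0 : P - 'X^r * Q = 0.
  rewrite -scaleN1r; apply: (@GP R js _ 0 1 m (supp (-1))).
  - exact: lexx.
  - by rewrite -szjs leq_addr.
  - by rewrite scaleN1r.
have P0 : P = 0.
  have : (P + 'X^r * Q) + (P - 'X^r * Q) = P *+ 2 by rewrite addrACA subrr addr0 mulr2n.
  rewrite A0 B0 addr0 => /esym h; apply/polyP => i.
  have /eqP := congr1 (fun p : {poly R} => p`_i) h.
  by rewrite /= coefMn coef0 mulrn_eq0 /= => /eqP.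
split => //.
move: A0; rewrite P0 add0r => /eqP; rewrite mulf_eq0 expf_eq0 polyX_eq0 andbF /=.
by move/eqP.
Qed.

Definition Tr {R : realType} (n : nat) (p : {poly R}) : {poly R} :=
  \sum_(i < n) p`_i *: (('X - 1)^+i * ('X + 1)^+(n.-1 - i)).

Lemma Tr_eval {R : realType} n (p : {poly R}) (x : R) : x != 1 -> (size p <= n)%N ->
  (Tr n p).[(1 + x) / (1 - x)] = (2 / (1 - x)) ^+ n.-1 * p.[x].
Proof.
move=> x1 sp.
have x1' : 1 - x != 0 by rewrite subr_eq0 eq_sym.
have e1 : (1 + x) / (1 - x) - 1 = 2 / (1 - x) * x by field.
have e2 : (1 + x) / (1 - x) + 1 = 2 / (1 - x) by field.
rewrite /Tr horner_sum (horner_coef_wide x sp) mulr_sumr; apply: eq_bigr => i _.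
rewrite hornerZ hornerM !horner_exp hornerD hornerD hornerN hornerX hornerC e2 -[_ + - _]/(_ - _) e1.
rewrite exprMn mulrAC -exprD subnKC; last by rewrite -ltnS prednK // (leq_ltn_trans _ (ltn_ord i)).
by rewrite mulrCA.
Qed.

Lemma Tr_size {R : realType} n (p : {poly R}) : (size (Tr n p) <= n)%N.
Proof.
rewrite /Tr; apply: (leq_trans (size_sum _ _ _)); apply/bigmax_leqP => i _.
apply: (leq_trans (size_scale_leq _ _)); apply: (leq_trans (size_polyMleq _ _)).
have -> : ('X - 1 : {poly R}) = 'X - 1%:P by rewrite polyC1.
have -> : ('X + 1 : {poly R}) = 'X - (-1)%:P by rewrite polyCN polyC1 opprK.
rewrite !size_exp_XsubC /=.
have := ltn_ord i; lia.
Qed.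

Lemma Tr0 {R : realType} n (p : {poly R}) : (size p <= n)%N -> Tr n p = 0 -> p = 0.
Proof.
move=> sp T0.
pose f := fun i : nat => ((i.+2)%:R : R)^-1.
apply: (@roots_geq_poly_eq0 _ p [seq f i | i <- iota 0 (size p)]); last first.
- by rewrite size_map size_iota.
- rewrite map_inj_uniq ?iota_uniq // => i j /invr_inj /eqP.
  by rewrite eqr_nat => /eqP [].
apply/allP => _ /mapP[i _ ->].
have f1 : f i != 1.
  by rewrite /f invr_eq1 // pnatr_eq1.
have := @Tr_eval R n p (f i) f1 sp; rewrite T0 horner0 => /esym/eqP.
rewrite mulf_eq0 expf_eq0 mulf_eq0 invr_eq0 subr_eq0 (eq_sym 1) (negbTE f1).
by rewrite pnatr_eq0 /= andbF /root.
Qed.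

Lemma pe_add {R : realType} (p : {poly R}) x : (peven p).[x] + (podd p).[x] = p.[x].
Proof.
rewrite /peven /podd !horner_poly -big_split horner_coef; apply: eq_bigr => i _.
by case: (odd i) => /=; rewrite mul0r ?addr0 ?add0r.
Qed.

Lemma pe_sub {R : realType} (p : {poly R}) x : (peven p).[x] - (podd p).[x] = p.[- x].
Proof.
rewrite /peven /podd !horner_poly -sumrN -big_split horner_coef; apply: eq_bigr => i _.
rewrite exprNn -signr_odd.
by case: (odd i) => /=; rewrite mul0r ?oppr0 ?addr0 ?add0r ?expr1 ?expr0 ?mul1r ?mulN1r ?mulrN.
Qed.

Lemma Wid {R : realType} (m r : nat) (x : R) : (r < m)%N -> x != 1 ->
  ((1 + x) / (1 - x)) ^+ r * (4 ^+ r * (2 / (1 - x)) ^+ (m - r).-1)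
  = (2 / (1 - x)) ^+ (m + r).-1 * (1 - x ^+ 2) ^+ r.
Proof.
move=> rm x1.
have x1' : 1 - x != 0 by rewrite subr_eq0 eq_sym.
have -> : (m + r).-1 = ((m - r).-1 + (r + r))%N by lia.
have key : 4 * ((1 + x) / (1 - x)) = (2 / (1 - x)) * (2 / (1 - x)) * (1 - x ^+ 2) by field.
rewrite exprD (exprD _ r r) -exprMn -mulrA -exprMn -key [(4 * _) ^+ r]exprMn.
move: (((1 + x) / (1 - x)) ^+ r) (4 ^+ r : R) ((2 / (1 - x)) ^+ (m - r).-1) => a b c.
ring.
Qed.

Lemma evalPQ {R : realType} (m r : nat) (p q : {poly R}) (s x : R) :
  (r < m)%N -> x != 1 -> (size p <= m + r)%N -> (size q <= m - r)%N ->
  (Tr (m + r) p + s *: ('X^r * (4 ^+ r *: Tr (m - r) q))).[(1 + x) / (1 - x)]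
  = (2 / (1 - x)) ^+ (m + r).-1 * (p.[x] + s * (q.[x] * (1 - x ^+ 2) ^+ r)).
Proof.
move=> rm x1 sp sq.
rewrite hornerD hornerZ hornerM hornerXn hornerZ !Tr_eval //.
have W := @Wid R m r x rm x1.
move: W; move: (((1 + x) / (1 - x)) ^+ r) (4 ^+ r : R) ((2 / (1 - x)) ^+ (m - r).-1).
move: ((2 / (1 - x)) ^+ (m + r).-1) ((1 - x ^+ 2) ^+ r) p.[x] q.[x] => D w P Q a b c W.
have -> : a * (b * (c * Q)) = (a * (b * c)) * Q by ring.
rewrite W; ring.
Qed.

Lemma mob_inj {R : realType} (a b : R) : a != 1 -> b != 1 ->
  (1 + a) / (1 - a) = (1 + b) / (1 - b) -> a = b.
Proof.
move=> a1 b1 e.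
have inv (x : R) : x != 1 -> ((1 + x) / (1 - x) - 1) / ((1 + x) / (1 - x) + 1) = x.
  move=> x1; have x1' : 1 - x != 0 by rewrite subr_eq0 eq_sym.
  field.
  have -> : 1 + x + (1 - x) = 2 :> R by ring.
  by rewrite x1' pnatr_eq0.
by rewrite -(inv a a1) e inv.
Qed.

Theorem proposition2p5 (R : realType) (m k : nat)
  (hk1 : (1 <= k)%N) (hkm : (k <= m)%N)
  (p q : {poly R})
  (hp : (size p <= 2 * m - k)%N) (hq : (size q <= k)%N)
  (t : 'I_m -> R) (ht_inj : injective t)
  (ht01 : forall i, 0 < t i < 1)
  (h1 : forall i, (peven p).[t i] + (podd q).[t i] * (1 - t i ^+ 2) ^+ (m - k) = 0)
  (h2 : forall i, (podd p).[t i] + (peven q).[t i] * (1 - t i ^+ 2) ^+ (m - k) = 0) :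
  p = 0 /\ q = 0.
Proof.
have rm : (m - k < m)%N by lia.
have sP : (size p <= m + (m - k))%N by lia.
have sQ : (size q <= m - (m - k))%N by lia.
move: h1 h2; set r := (m - k)%N => h1 h2.
have E1 i : p.[t i] + 1 * (q.[t i] * (1 - t i ^+ 2) ^+ r) = 0.
  rewrite mul1r -pe_add -(pe_add q) (addrC (peven q).[_]) mulrDl addrACA.
  by rewrite h1 h2 addr0.
have E2 i : p.[- t i] + (-1) * (q.[- t i] * (1 - (- t i) ^+ 2) ^+ r) = 0.
  rewrite sqrrN -pe_sub -(pe_sub q).
  have -> : forall a b c d w : R, (a - b) + (-1) * ((c - d) * w) = (a + d * w) - (b + c * w).
    by move=> *; ring.
  by rewrite h1 h2 subr0.
have t1 i : t i != 1 by have /andP[_ ti] := ht01 i; rewrite lt_eqF.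
have nt1 i : - t i != 1.
  have /andP[ti _] := ht01 i; apply/eqP => e.
  by move: ti; rewrite -oppr_lt0 e ltr10.
pose y i := (1 + t i) / (1 - t i).
pose z i := (1 + - t i) / (1 - - t i).
set P := Tr (m + r) p.
set Q := 4 ^+ r *: Tr (m - r) q.
have yinj : injective y.
  by move=> i j /mob_inj e; apply: ht_inj; apply: e.
have zinj : injective z.
  move=> i j /mob_inj e; apply: ht_inj; apply: oppr_inj; exact: e.
have ypos i : 1 < y i.
  have /andP[ti t1'] := ht01 i.
  by rewrite /y ltr_pdivlMr ?subr_gt0 // mul1r ltrBlDr -addrA ltrDl addr_gt0.
have zin i : 0 < z i < 1.
  have /andP[ti t1'] := ht01 i.
  rewrite /z opprK divr_gt0 ?subr_gt0 ?addr_gt0 //=.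
  by rewrite ltr_pdivrMr ?addr_gt0 // mul1r ltrD2l gtrN.
pose hiA := \sum_(i < m) y i + 2.
have S0 : 0 <= \sum_(i < m) y i.
  by apply: sumr_ge0 => j _; apply: le_trans (ltW (ypos j)); apply: ler01.
have hiA1 : 1 < hiA by rewrite /hiA; apply: ltr_wpDl S0 _; rewrite ltr1n.
have yhi i : y i < hiA.
  rewrite /hiA (bigD1 i) //= -addrA ltrDl; apply: ltr_wpDl; last exact: ltr0Sn.
  by apply: sumr_ge0 => j _; apply: le_trans (ltW (ypos j)); apply: ler01.
have [P0 Q0] : P = 0 /\ Q = 0.
  apply: (@core R m r P Q hiA rm) => //.
  - by apply: Tr_size.
  - rewrite /Q; apply: (leq_trans (size_scale_leq _ _)); exact: Tr_size.
  - exists [seq y i | i <- enum 'I_m]; split.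
    + by rewrite size_map size_enum_ord.
    + by rewrite map_inj_uniq ?enum_uniq.
    + by apply/allP => _ /mapP[i _ ->]; rewrite ypos yhi.
    + apply/allP => _ /mapP[i _ ->]; rewrite /root -[_ * Q]scale1r.
      by rewrite evalPQ // E1 mulr0.
  - exists [seq z i | i <- enum 'I_m]; split.
    + by rewrite size_map size_enum_ord.
    + by rewrite map_inj_uniq ?enum_uniq.
    + by apply/allP => _ /mapP[i _ ->]; rewrite zin.
    + apply/allP => _ /mapP[i _ ->]; rewrite /root -scaleN1r.
      by rewrite evalPQ // E2 mulr0.
split; first exact: (@Tr0 R (m + r) p sP P0).
apply: (@Tr0 R (m - r) q sQ); move/eqP: Q0; rewrite /Q; rewrite scaler_eq0 expf_eq0 pnatr_eq0 andbF /=.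
by move/eqP.
Qed.
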